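(* Let $p$ be a prime and $n,k$ positive integers with $(p,k-1)=1$ and $n=\mathrm{ind}_p(k)$; let $G=G(p,n,k)=\langle a,b;\ a^p=1,\ b^n=1,\ b^{-1}ab=a^k\rangle$ and let $S\subseteq\mathbb{Z}_p$ be a base. Then $\Sigma_G(S)$ is complete.
   Context: $\mathrm{ind}_p(k)$ is the least positive integer $d$ with $k^d\equiv 1\pmod p$. Elements of $G$ are written uniquely as $a^ib^j$, $i\in\mathbb{Z}_p$, $j\in\mathbb{Z}_n$; $k_t=k^t-1\pmod p$. Maps are written on the right and composed left to right. For $x,y\in\mathbb{Z}_p$, $\mu(x,y):G\to G$ is $(a^ib^j)\mu(x,y)=a^{xik^j-yk_j}$, and $C(x,y)=\{\mu(x,yz):z\in\mathbb{Z}_p\}$. For $S\subseteq\mathbb{Z}_p$, $I(S)$ is the set of invertible elements of $S$ and $S^*$ is the multiplicative subsemigroup of $\mathbb{Z}_p$ generated by $S$. A base is $S\subseteq \mathbb{Z}_p$ with $0\in S$ and $I(S)\ne\varnothing$. $\Sigma_G(S)$ is the semigroup under composition generated by $\{\mu(s,z):s\in S,z\in\mathbb{Z}_p\}$. For $x\in S^*$, $Y(x)=\{s^*z: s^*\in S^*, z\in\mathbb{Z}_p, \exists s\in S,\ x\equiv ss^*\}$, $\mathcal{F}_G(x,S)=\{C(x,y):y\in Y(x)\}$; this family is complete if $C(x,1)\in\mathcal{F}_G(x,S)$, and $\Sigma_G(S)$ is complete if every $x$-family ($x\in S^*$) is complete. *)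

(* Defs.v *)
From HB Require Import structures.
From mathcomp Require Import all_boot all_order all_algebra.
Set Implicit Arguments. Unset Strict Implicit. Unset Printing Implicit Defensive.
Import GRing.Theory.
Local Open Scope ring_scope.

Definition is_ind (p k n : nat) : Prop :=
  [/\ (0 < n)%N, (k ^ n = 1 %[mod p])%N &
      forall d : nat, (0 < d)%N -> (d < n)%N -> (k ^ d <> 1 %[mod p])%N].

(* Elements of G = G(p,n,k) written in normal form a^i b^j,
   i in Z_p, j in Z_n : the pair (i, j). *)
Definition Gel (p n : nat) := ('F_p * 'I_n)%type.

Definition ord0_of (n : nat) (j : 'I_n) : 'I_n :=
  Ordinal (leq_ltn_trans (leq0n j) (ltn_ord j)).

Definition kt (p k t : nat) : 'F_p := (k%:R) ^+ t - 1.

Definition mu (p n k : nat) (x y : 'F_p) : {ffun Gel p n -> Gel p n} :=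
  [ffun g : Gel p n => (x * g.1 * (k%:R) ^+ g.2 - y * kt p k g.2, ord0_of g.2)].

Definition Cset (p n k : nat) (x y : 'F_p) : {set {ffun Gel p n -> Gel p n}} :=
  [set mu n k x (y * z) | z : 'F_p].

Definition Iset (p : nat) (S : {set 'F_p}) : {set 'F_p} :=
  [set s in S | s \is a GRing.unit].

Definition is_base (p : nat) (S : {set 'F_p}) : Prop :=
  (0 \in S) /\ Iset S != set0.

Definition in_semigrp (p : nat) (S : {set 'F_p}) (x : 'F_p) : Prop :=
  exists s : seq 'F_p, [/\ s != [::], all (fun t => t \in S) s &
                           x = \prod_(t <- s) t].

Definition in_Y (p : nat) (S : {set 'F_p}) (x y : 'F_p) : Prop :=
  exists sst : 'F_p, exists z : 'F_p,
    [/\ in_semigrp S sst, y = sst * z & exists2 s, s \in S & x = s * sst].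

(* the x-family F_G(x,S) = { C(x,y) : y in Y(x) } is complete iff
   C(x,1) belongs to it *)
Definition family_complete (p n k : nat) (S : {set 'F_p}) (x : 'F_p) : Prop :=
  exists y : 'F_p, in_Y S x y /\ Cset n k x y = Cset n k x 1.

Definition Sigma_complete (p n k : nat) (S : {set 'F_p}) : Prop :=
  forall x : 'F_p, in_semigrp S x -> family_complete n k S x.

(* Main.v *)
Require Import Defs.
From mathcomp Require Import all_boot all_order all_algebra all_field.
Import GRing.Theory.
Local Open Scope ring_scope.

Lemma unit_pow_one (F : finFieldType) : exists m : nat, (0 < m)%N /\
  forall u : F, u != 0 -> u ^+ m = 1.
Proof.
have h2 : (2 <= #|F|)%N.
  have := subset_leq_card (subsetT [set (0:F); 1]).
  by rewrite cards2 eq_sym oner_neq0 cardsT.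
exists (#|F|.-1); split; first by case: #|F| h2 => [|[|]].
move=> u u0; apply: (mulIf u0); rewrite mul1r -exprSr prednK ?expf_card //.
by apply: leq_trans h2.
Qed.

Lemma Cset_unit (p n k : nat) (x y : 'F_p) : y != 0 -> Cset n k x y = Cset n k x 1.
Proof.
move=> y0; apply/setP => f; apply/imsetP/imsetP => [[z _ ->]|[z _ ->]].
  by exists (y * z) => //; rewrite mul1r.
exists (y^-1 * z) => //; by rewrite mulrA mulfV // !mul1r.
Qed.

Lemma semigrp_prod (p : nat) (S : {set 'F_p}) (s : seq 'F_p) :
  s != [::] -> all (fun t => t \in S) s -> in_semigrp S (\prod_(t <- s) t).
Proof. by move=> h1 h2; exists s. Qed.

Theorem theorem6p1 (p n k : nat) (S : {set 'F_p}) :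
  prime p -> (0 < n)%N -> (0 < k)%N -> coprime p (k - 1) -> is_ind p k n ->
  is_base S -> Sigma_complete n k S.
Proof.
move=> _ _ _ _ _ [S0 /set0Pn [u]]; rewrite inE => /andP [uS uU] x [l [ln0 lS ->]].
have u0 : u != 0 by apply/negP => /eqP u0; move: uU; rewrite u0 unitr0.
have [->|x0] := eqVneq (\prod_(t <- l) t) 0.
  exists u; split; last exact: Cset_unit.
  exists u, 1; split; first by exists [:: u]; rewrite /= uS big_seq1.
    by rewrite mulr1.
  by exists 0 => //; rewrite mul0r.
case: l ln0 lS x0 => [//|s t] _ /= /andP [sS tS].
rewrite big_cons => x0.
have [m [m0 hm]] := unit_pow_one ('F_p : finFieldType).
set y := \prod_(t0 <- t ++ nseq m u) t0.
have ye : y = \prod_(t0 <- t) t0.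
  rewrite /y big_cat /=.
  have -> : \prod_(t0 <- nseq m u) t0 = u ^+ m.
    by elim: (m) => [|j IH]; rewrite ?big_nil // /= big_cons IH exprS.
  by rewrite hm // mulr1.
exists y; split; last first.
  by apply: Cset_unit; rewrite ye; apply: contraNneq x0 => ->; rewrite mulr0.
exists y, 1; split; last by exists s => //; rewrite ye.
  apply: semigrp_prod; first by case: (t) => //; case: (m) m0.
  by rewrite all_cat tS /=; apply/allP => v /nseqP [-> _].
by rewrite mulr1.
Qed.
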